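(* Let $a<b$, $n\ge 1$, $h=(b-a)/n$, $x_k=a+kh$, and let $S^n_{5,1}$ and the Gaussian quadrature rule be as in the context. Then for every $k=1,\dots,n$ the open interval $J_k=(x_{k-1},x_k)$ contains at least two nodes of the Gaussian quadrature rule.
   Context: $S^n_{5,1}=\{f\in C^1[a,b]:\ f|_{(x_{k-1},x_k)}\text{ is a polynomial of degree}\le 5,\ k=1,\dots,n\}$; it has dimension $4n+2$. A Gaussian quadrature rule for $S^n_{5,1}$ is a rule $f\mapsto\sum_{i=1}^{2n+1}\omega_i f(\tau_i)$ with $2n+1$ distinct nodes $\tau_i\in[a,b]$ and positive weights $\omega_i>0$ such that $\int_a^b f(t)\,dt=\sum_{i=1}^{2n+1}\omega_i f(\tau_i)$ for every $f\in S^n_{5,1}$ (by a result of Micchelli and Pinkus, $2n+1$ is the minimal number of nodes of a rule exact on $S^n_{5,1}$, and such a rule exists). *)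

(* Defs.v *)
From Stdlib Require Import Reals.
Open Scope R_scope.

Definition knot (a b : R) (n k : nat) : R := a + INR k * ((b - a) / INR n).

Definition C1_on (a b : R) (f : R -> R) : Prop :=
  exists g : R -> R,
    (forall t, a <= t <= b ->
       limit1_in (fun y => (f y - f t) / (y - t))
                 (fun y => a <= y <= b /\ y <> t) (g t) t) /\
    (forall t, a <= t <= b ->
       limit1_in g (fun y => a <= y <= b) (g t) t).

Definition poly5_on (l r : R) (f : R -> R) : Prop :=
  exists c : nat -> R,
    forall t, l < t < r -> f t = sum_f_R0 (fun i => c i * t ^ i) 5.

Definition S51 (a b : R) (n : nat) (f : R -> R) : Prop :=
  C1_on a b f /\
  forall k : nat, (1 <= k <= n)%nat -> poly5_on (knot a b n (k - 1)) (knot a b n k) f.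

Definition gauss_rule (a b : R) (n : nat) (tau omega : nat -> R) : Prop :=
  (forall i j : nat, (i < 2 * n + 1)%nat -> (j < 2 * n + 1)%nat -> i <> j ->
     tau i <> tau j) /\
  (forall i : nat, (i < 2 * n + 1)%nat -> a <= tau i <= b) /\
  (forall i : nat, (i < 2 * n + 1)%nat -> 0 < omega i) /\
  (forall f : R -> R, S51 a b n f ->
     forall pr : Riemann_integrable f a b,
       RiemannInt pr = sum_f_R0 (fun i => omega i * f (tau i)) (2 * n)).

(* Main.v *)
Require Import Defs.
From Stdlib Require Import Reals Lra Lia Classical.
From Coquelicot Require Import Coquelicot.
Open Scope R_scope.

Lemma cont_eps f x : continuity_pt f x <->
  forall eps, 0 < eps -> exists d, 0 < d /\ forall y, Rabs (y - x) < d -> Rabs (f y - f x) < eps.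
Proof.
  unfold continuity_pt, continue_in, limit1_in, limit_in, D_x, no_cond; simpl; unfold R_dist.
  split.
  - intros H eps He. destruct (H eps He) as [d [Hd H']]. exists d; split; auto.
    intros y Hy. destruct (Req_dec y x) as [->|Hn].
    + rewrite Rminus_diag, Rabs_R0; auto.
    + apply H'; split; auto.
  - intros H eps He. destruct (H eps He) as [d [Hd H']]. exists d; split; auto.
    intros y [_ Hy]; auto.
Qed.

Definition glue (c : R) (f g : R -> R) : R -> R :=
  fun y => if Rle_dec y c then f y else g y.

Lemma glue_der c f g f' g' :
  (forall x, derivable_pt_lim f x (f' x)) -> (forall x, derivable_pt_lim g x (g' x)) ->
  f c = g c -> f' c = g' c ->
  forall x, derivable_pt_lim (glue c f g) x (glue c f' g' x).
Proof.
  intros Hf Hg E1 E2 x eps Heps. unfold glue.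
  destruct (Rlt_le_dec x c) as [Hlt|Hge].
  - destruct (Hf x eps Heps) as [d Hd].
    assert (Hpos: 0 < Rmin d (c - x)) by (apply Rmin_pos; [apply cond_pos|lra]).
    exists (mkposreal _ Hpos). intros h Hh0 Hh. simpl in Hh.
    assert (Ha : Rabs h < d) by (eapply Rlt_le_trans; [exact Hh|apply Rmin_l]).
    assert (Hb : Rabs h < c - x) by (eapply Rlt_le_trans; [exact Hh|apply Rmin_r]).
    apply Rabs_def2 in Hb.
    destruct (Rle_dec x c); [|lra]. destruct (Rle_dec (x+h) c); [|lra].
    apply Hd; auto.
  - destruct (Req_dec x c) as [Heq|Hne].
    + subst x. destruct (Hf c eps Heps) as [d1 H1]; destruct (Hg c eps Heps) as [d2 H2].
      exists (mkposreal (Rmin d1 d2) (Rmin_pos _ _ (cond_pos d1) (cond_pos d2))).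
      intros h Hh0 Hh; simpl in Hh.
      assert (Ha : Rabs h < d1) by (eapply Rlt_le_trans; [exact Hh|apply Rmin_l]).
      assert (Hb : Rabs h < d2) by (eapply Rlt_le_trans; [exact Hh|apply Rmin_r]).
      destruct (Rle_dec c c); [|lra]. destruct (Rle_dec (c+h) c).
      * apply H1; auto.
      * rewrite E1, E2. apply H2; auto.
    + destruct (Hg x eps Heps) as [d Hd].
      assert (Hpos: 0 < Rmin d (x - c)) by (apply Rmin_pos; [apply cond_pos|lra]).
      exists (mkposreal _ Hpos). intros h Hh0 Hh. simpl in Hh.
      assert (Ha : Rabs h < d) by (eapply Rlt_le_trans; [exact Hh|apply Rmin_l]).
      assert (Hb : Rabs h < x - c) by (eapply Rlt_le_trans; [exact Hh|apply Rmin_r]).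
      apply Rabs_def2 in Hb.
      destruct (Rle_dec x c); [lra|]. destruct (Rle_dec (x+h) c); [lra|].
      apply Hd; auto.
Qed.

Lemma glue_cont c f g :
  (forall x, continuity_pt f x) -> (forall x, continuity_pt g x) -> f c = g c ->
  forall x, continuity_pt (glue c f g) x.
Proof.
  intros Hf Hg E x. apply cont_eps. intros eps Heps. unfold glue.
  destruct (Rlt_le_dec x c) as [Hlt|Hge].
  - destruct (proj1 (cont_eps f x) (Hf x) eps Heps) as [d [Hd H]].
    exists (Rmin d (c - x)); split; [apply Rmin_pos; lra|].
    intros y Hy.
    assert (Ha : Rabs (y-x) < d) by (eapply Rlt_le_trans; [exact Hy|apply Rmin_l]).
    assert (Hb : Rabs (y-x) < c - x) by (eapply Rlt_le_trans; [exact Hy|apply Rmin_r]).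
    apply Rabs_def2 in Hb.
    destruct (Rle_dec x c); [|lra]. destruct (Rle_dec y c); [|lra]. auto.
  - destruct (Req_dec x c) as [Heq|Hne].
    + subst x.
      destruct (proj1 (cont_eps f c) (Hf c) eps Heps) as [d1 [Hd1 H1]].
      destruct (proj1 (cont_eps g c) (Hg c) eps Heps) as [d2 [Hd2 H2]].
      exists (Rmin d1 d2); split; [apply Rmin_pos; lra|].
      intros y Hy.
      assert (Ha : Rabs (y-c) < d1) by (eapply Rlt_le_trans; [exact Hy|apply Rmin_l]).
      assert (Hb : Rabs (y-c) < d2) by (eapply Rlt_le_trans; [exact Hy|apply Rmin_r]).
      destruct (Rle_dec c c); [|lra]. destruct (Rle_dec y c); auto.
      rewrite E; auto.
    + destruct (proj1 (cont_eps g x) (Hg x) eps Heps) as [d [Hd H]].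
      exists (Rmin d (x - c)); split; [apply Rmin_pos; lra|].
      intros y Hy.
      assert (Ha : Rabs (y-x) < d) by (eapply Rlt_le_trans; [exact Hy|apply Rmin_l]).
      assert (Hb : Rabs (y-x) < x - c) by (eapply Rlt_le_trans; [exact Hy|apply Rmin_r]).
      apply Rabs_def2 in Hb.
      destruct (Rle_dec x c); [lra|]. destruct (Rle_dec y c); [lra|]. auto.
Qed.

Lemma C1_from a b F g : (forall x, derivable_pt_lim F x (g x)) ->
  (forall x, continuity_pt g x) -> C1_on a b F.
Proof.
  intros HF Hg. exists g. split.
  - intros t _. unfold limit1_in, limit_in; simpl; unfold R_dist.
    intros eps Heps. destruct (HF t eps Heps) as [d Hd].
    exists d; split; [apply cond_pos|]. intros y [[_ Hyt] Hy].
    replace y with (t + (y - t)) at 1 by ring. apply Hd; auto. lra.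
  - intros t _. unfold limit1_in, limit_in; simpl; unfold R_dist.
    intros eps Heps. destruct (proj1 (cont_eps g t) (Hg t) eps Heps) as [d [Hd H]].
    exists d; split; auto. intros y [_ Hy]; auto.
Qed.

Lemma poly5_shift lo hi s b0 b1 b2 b3 b4 b5 (f : R -> R) :
  (forall x, lo < x < hi -> f x = b0 + b1*(x-s) + b2*(x-s)^2 + b3*(x-s)^3 + b4*(x-s)^4 + b5*(x-s)^5) ->
  poly5_on lo hi f.
Proof.
  intros H.
  exists (fun i => match i with
    | 0%nat => b0 - b1*s + b2*s^2 - b3*s^3 + b4*s^4 - b5*s^5
    | 1%nat => b1 - 2*b2*s + 3*b3*s^2 - 4*b4*s^3 + 5*b5*s^4
    | 2%nat => b2 - 3*b3*s + 6*b4*s^2 - 10*b5*s^3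
    | 3%nat => b3 - 4*b4*s + 10*b5*s^2
    | 4%nat => b4 - 5*b5*s
    | _ => b5 end).
  intros t Ht. rewrite (H t Ht). simpl. ring.
Qed.

Lemma sum_nonneg (f : nat -> R) N : (forall i, (i <= N)%nat -> 0 <= f i) -> 0 <= sum_f_R0 f N.
Proof.
  induction N; intros H; simpl. apply H; lia.
  assert (0 <= sum_f_R0 f N) by (apply IHN; intros; apply H; lia).
  assert (0 <= f (S N)) by (apply H; lia). lra.
Qed.

Lemma sum_zero_each (f : nat -> R) N : (forall i, (i <= N)%nat -> 0 <= f i) ->
  sum_f_R0 f N = 0 -> forall i, (i <= N)%nat -> f i = 0.
Proof.
  induction N; intros H HS i Hi; simpl in HS.
  - replace i with 0%nat by lia. auto.
  - assert (0 <= sum_f_R0 f N) by (apply sum_nonneg; intros; apply H; lia).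
    assert (0 <= f (S N)) by (apply H; lia).
    destruct (Nat.eq_dec i (S N)) as [->|Hn]; [lra|].
    apply IHN; [intros; apply H; lia| lra | lia].
Qed.

Section P.
Variables l h t : R.
Definition Pp x := - h^2 * ((x-l)^2 * (x-t)^2 * (l+h-x)).
Definition dPp x := - h^2 * (2*(x-l)*(x-t)^2*(l+h-x) + (x-l)^2*(2*(x-t))*(l+h-x) - (x-l)^2*(x-t)^2).
Definition APp x := let T := t - l in let y := x - l in
  - h^2 * (- y^6/6 + (h+2*T)*y^5/5 - (2*T*h+T^2)*y^4/4 + T^2*h*y^3/3).
Definition Sg := (l+h-t)^2.
Definition Gp x := Sg * ((x-(l+h)) * (l+2*h-x)^2 * (2*l+3*h-2*x)^2).
Definition dGp x := Sg * ((l+2*h-x)^2 * (2*l+3*h-2*x)^2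
   + (x-(l+h)) * (2*(l+2*h-x)*(-1)) * (2*l+3*h-2*x)^2
   + (x-(l+h)) * (l+2*h-x)^2 * (2*(2*l+3*h-2*x)*(-2))).
Definition AGp x := let z := x - (l+h) in
  Sg * (h^4*z^2/2 - 2*h^3*z^3 + 13*h^2*z^4/4 - 12*h*z^5/5 + 2*z^6/3).

Lemma d_P x : derivable_pt_lim Pp x (dPp x).
Proof. apply is_derive_Reals. unfold Pp, dPp. auto_derive; auto. ring. Qed.
Lemma d_G x : derivable_pt_lim Gp x (dGp x).
Proof. apply is_derive_Reals. unfold Gp, dGp. auto_derive; auto. ring. Qed.
Lemma d_AP x : derivable_pt_lim APp x (Pp x).
Proof. apply is_derive_Reals. unfold APp, Pp. auto_derive; auto. field. Qed.
Lemma d_AG x : derivable_pt_lim AGp x (Gp x).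
Proof. apply is_derive_Reals. unfold AGp, Gp. auto_derive; auto. field. Qed.
Lemma c_dP x : continuity_pt dPp x.
Proof. apply derivable_continuous_pt, ex_derive_Reals_0. unfold dPp; auto_derive; auto. Qed.
Lemma c_dG x : continuity_pt dGp x.
Proof. apply derivable_continuous_pt, ex_derive_Reals_0. unfold dGp; auto_derive; auto. Qed.
End P.

Section F.
Variables l h t : R.
Hypothesis hpos : 0 < h.
Definition FF := glue l (fun _ => 0) (glue (l+h) (Pp l h t) (glue (l+2*h) (Gp l h t) (fun _ => 0))).
Definition DF := glue l (fun _ => 0) (glue (l+h) (dPp l h t) (glue (l+2*h) (dGp l h t) (fun _ => 0))).
Definition AF := glue l (fun _ => 0) (glue (l+h) (APp l h t)
   (glue (l+2*h) (fun x => APp l h t (l+h) + AGp l h t x) (fun _ => APp l h t (l+h) + AGp l h t (l+2*h)))).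

Ltac gl := unfold glue; repeat match goal with |- context [Rle_dec ?a ?b] =>
   destruct (Rle_dec a b); try lra end.

Lemma FF_der x : derivable_pt_lim FF x (DF x).
Proof.
  unfold FF, DF. apply glue_der.
  - intros; apply derivable_pt_lim_const.
  - apply glue_der.
    + apply d_P.
    + apply glue_der. apply d_G. intros; apply derivable_pt_lim_const.
      unfold Gp; ring. unfold dGp; ring.
    + gl. unfold Gp, Pp; ring.
    + gl. unfold dGp, dPp, Sg; ring.
  - gl. unfold Pp; ring.
  - gl. unfold dPp; ring.
Qed.

Lemma DF_cont x : continuity_pt DF x.
Proof.
  unfold DF. apply glue_cont.
  - intros; apply continuity_pt_const; intros ? ?; auto.
  - apply glue_cont.
    + apply c_dP.
    + apply glue_cont. apply c_dG. intros; apply continuity_pt_const; intros ? ?; auto.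
      unfold dGp; ring.
    + gl. unfold dGp, dPp, Sg; ring.
  - gl. unfold dPp; ring.
Qed.

Lemma FF_cont x : continuity_pt FF x.
Proof. apply derivable_continuous_pt. exists (DF x). apply FF_der. Qed.

Lemma AF_der x : derivable_pt_lim AF x (FF x).
Proof.
  unfold AF, FF. apply glue_der.
  - intros; apply derivable_pt_lim_const.
  - apply glue_der.
    + apply d_AP.
    + apply glue_der.
      * intros y. replace (Gp l h t y) with (0 + Gp l h t y) by ring.
        apply derivable_pt_lim_plus. apply derivable_pt_lim_const. apply d_AG.
      * intros; apply derivable_pt_lim_const.
      * auto.
      * unfold Gp; ring.
    + gl. unfold AGp; cbv zeta; field.
    + gl. unfold Gp, Pp; ring.
  - gl. unfold APp; cbv zeta; field.
  - gl. unfold Pp; ring.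
Qed.

Lemma FF_int a b (pr : Riemann_integrable FF a b) : a <= l -> a <= b ->
  RiemannInt pr = AF b - AF a.
Proof.
  intros Hal Hab. rewrite <- RInt_Reals.
  apply is_RInt_unique.
  assert (H := is_RInt_derive AF FF a b).
  unfold minus, plus, opp in H; simpl in H. apply H.
  - intros x _. apply is_derive_Reals, AF_der.
  - intros x _. apply continuity_pt_filterlim, FF_cont.
Qed.

Lemma AF_a a : a <= l -> AF a = 0.
Proof. intros. unfold AF; gl. Qed.

Lemma AF_far b : l + 2*h <= b -> AF b = - h^6 * (l + (l+h) - 2*t)^2 / 60.
Proof. intros. destruct (Req_dec b (l+2*h)) as [->|Hn]; unfold AF; gl; unfold APp, AGp, Sg; cbv zeta; field. Qed.

Lemma AF_r : AF (l+h) = - h^2 * h^4 * (h^2/30 - (t-l)*h/10 + (t-l)^2/12).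
Proof. unfold AF; gl. unfold APp; cbv zeta. field. Qed.

Lemma FF_nonneg x : (l < x < l + h -> x = t) -> 0 <= FF x.
Proof.
  intros Hx. unfold FF, glue.
  destruct (Rle_dec x l). lra.
  destruct (Rle_dec x (l+h)).
  - destruct (Req_dec x (l+h)) as [->|Hn].
    + unfold Pp; right; ring.
    + rewrite Hx by lra. unfold Pp; right; ring.
  - destruct (Rle_dec x (l+2*h)); [|lra].
    unfold Gp, Sg. apply Rmult_le_pos. apply pow2_ge_0.
    apply Rmult_le_pos. apply Rmult_le_pos. lra. apply pow2_ge_0. apply pow2_ge_0.
Qed.
End F.

Lemma pow_eq_zero (x : R) : x ^ 2 = 0 -> x = 0.
Proof. intros H. simpl in H. rewrite Rmult_1_r in H. apply Rmult_integral in H. tauto. Qed.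

Lemma knot_S a b n k : knot a b n (S k) = knot a b n k + (b-a)/INR n.
Proof. unfold knot. rewrite S_INR. ring. Qed.

Lemma knot_mono a b n i i' : 0 < (b-a)/INR n -> (i <= i')%nat -> knot a b n i <= knot a b n i'.
Proof. intros H Hi. unfold knot. apply le_INR in Hi. nra. Qed.

Lemma knot_n a b n : (1 <= n)%nat -> knot a b n n = b.
Proof. intros. unfold knot. field. apply not_0_INR. lia. Qed.

Lemma knot_0 a b n : knot a b n 0 = a.
Proof. unfold knot. simpl. ring. Qed.

Lemma hpos a b n : a < b -> (1 <= n)%nat -> 0 < (b-a)/INR n.
Proof. intros. apply Rdiv_lt_0_compat. lra. apply lt_0_INR. lia. Qed.

Lemma S51_FF a b n j t : a < b -> (1 <= n)%nat -> (1 <= j <= n)%nat ->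
  S51 a b n (FF (knot a b n (j-1)) ((b-a)/INR n) t).
Proof.
  intros Hab Hn Hj. set (h := (b-a)/INR n). set (l := knot a b n (j-1)).
  assert (Hh : 0 < h) by (apply hpos; auto).
  assert (Hkj : knot a b n j = l + h).
  { unfold l, h. replace j with (S (j-1)) at 1 by lia. apply knot_S. }
  assert (HkSj : knot a b n (S j) = l + 2*h).
  { rewrite knot_S, Hkj. fold h. ring. }
  split.
  - apply C1_from with (g := DF l h t). intro; apply FF_der; auto. intro; apply DF_cont; auto.
  - intros k Hk.
    destruct (Nat.lt_ge_cases k j) as [Hlt|Hge].
    + assert (knot a b n k <= l) by (apply knot_mono; [exact Hh|lia]).
      apply (poly5_shift _ _ 0 0 0 0 0 0 0). intros x Hx.
      unfold FF, glue. destruct (Rle_dec x l); [ring|lra].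
    + destruct (Nat.eq_dec k j) as [->|Hne].
      * rewrite Hkj. fold l.
        apply (poly5_shift _ _ l 0 0 (-h^2*((t-l)^2*h)) (-h^2*(-(2*(t-l)*h+(t-l)^2)))
                 (-h^2*(h+2*(t-l))) (h^2)).
        intros x Hx. unfold FF, glue.
        destruct (Rle_dec x l); [lra|]. destruct (Rle_dec x (l+h)); [|lra].
        unfold Pp. ring.
      * destruct (Nat.eq_dec k (S j)) as [->|Hne2].
        -- replace (S j - 1)%nat with j by lia. rewrite Hkj, HkSj.
           set (S := Sg l h t).
           apply (poly5_shift _ _ (l+h) 0 (S*h^4) (-6*S*h^3) (13*S*h^2) (-12*S*h) (4*S)).
           intros x Hx. unfold FF, glue.
           destruct (Rle_dec x l); [lra|]. destruct (Rle_dec x (l+h)); [lra|].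
           destruct (Rle_dec x (l+2*h)); [|lra].
           unfold Gp. fold S. ring.
        -- assert (knot a b n (S j) <= knot a b n (k-1)) by (apply knot_mono; [exact Hh|lia]).
           rewrite HkSj in H.
           apply (poly5_shift _ _ 0 0 0 0 0 0 0). intros x Hx.
           unfold FF, glue. destruct (Rle_dec x l); [lra|]. destruct (Rle_dec x (l+h)); [lra|].
           destruct (Rle_dec x (l+2*h)); [lra|]. ring.
Qed.

Lemma key a b n tau omega : a < b -> (1 <= n)%nat -> gauss_rule a b n tau omega ->
  forall j t, (1 <= j <= n)%nat ->
  (forall i, (i < 2*n+1)%nat -> knot a b n (j-1) < tau i < knot a b n j -> tau i = t) ->
  (j < n)%nat /\ (forall i, (i < 2*n+1)%nat -> knot a b n (S j - 1) < tau i < knot a b n (S j) ->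
     tau i = knot a b n j + ((b-a)/INR n)/2).
Proof.
  intros Hab Hn [Hdist [Hin [Hw Hex]]] j t Hj Ht.
  set (h := (b-a)/INR n). set (l := knot a b n (j-1)).
  assert (Hh : 0 < h) by (apply hpos; auto).
  assert (Hkj : knot a b n j = l + h).
  { unfold l, h. replace j with (S (j-1)) at 1 by lia. apply knot_S. }
  assert (HkSj : knot a b n (S j) = l + 2*h).
  { rewrite knot_S, Hkj. fold h. ring. }
  assert (Hal : a <= l).
  { rewrite <- (knot_0 a b n). apply knot_mono; [exact Hh|lia]. }
  assert (HS := S51_FF a b n j t Hab Hn Hj). fold h l in HS.
  assert (pr : Riemann_integrable (FF l h t) a b).
  { apply continuity_implies_RiemannInt. lra. intros; apply FF_cont; auto. }
  assert (HE := Hex _ HS pr).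
  rewrite (FF_int l h t Hh a b pr Hal (Rlt_le _ _ Hab)) in HE.
  rewrite (AF_a l h t a Hal) in HE.
  assert (Hterm : forall i, (i <= 2*n)%nat -> 0 <= omega i * FF l h t (tau i)).
  { intros i Hi. apply Rmult_le_pos. left; apply Hw; lia.
    apply FF_nonneg; auto. intros Hx. apply Ht. lia. rewrite Hkj; auto. }
  assert (Hsum := sum_nonneg _ _ Hterm).
  destruct (Nat.eq_dec j n) as [Hjn|Hjn].
  - exfalso.
    assert (Hb : l + h = b) by (rewrite <- Hkj, Hjn; apply knot_n; auto).
    rewrite <- Hb in HE. rewrite (AF_r l h t Hh) in HE.
    assert (0 < h^2/30 - (t-l)*h/10 + (t-l)^2/12).
    { replace (h^2/30 - (t-l)*h/10 + (t-l)^2/12) with ((t-l-3*h/5)^2/12 + h^2/300) by field.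
      assert (0 < h^2) by (apply pow_lt; auto). assert (0 <= (t-l-3*h/5)^2) by apply pow2_ge_0. lra. }
    assert (0 < h^2 * h^4) by (apply Rmult_lt_0_compat; apply pow_lt; auto).
    assert (0 < h^2 * h^4 * (h^2/30 - (t-l)*h/10 + (t-l)^2/12)) by (apply Rmult_lt_0_compat; auto).
    lra.
  - split; [lia|].
    assert (Hm : l + 2*h <= b).
    { assert (knot a b n (S j) <= knot a b n n) by (apply knot_mono; [exact Hh|lia]). rewrite (knot_n a b n Hn) in H. lra. }
    rewrite (AF_far l h t Hh b Hm) in HE.
    assert (Hh6 : 0 < h^6) by (apply pow_lt; auto).
    assert (0 <= (l + (l+h) - 2*t)^2) by apply pow2_ge_0.
    assert (Hz : (l + (l+h) - 2*t)^2 = 0).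
    { assert (0 <= h^6 * (l + (l+h) - 2*t)^2) by (apply Rmult_le_pos; lra). nra. }
    apply pow_eq_zero in Hz.
    assert (Hs0 : sum_f_R0 (fun i => omega i * FF l h t (tau i)) (2*n) = 0).
    { rewrite <- HE, Hz. unfold Rdiv. rewrite pow_i by lia. ring. }
    intros i Hi Hx. replace (S j - 1)%nat with j in Hx by lia.
    rewrite Hkj, HkSj in Hx.
    assert (Hz2 := sum_zero_each _ _ Hterm Hs0 i ltac:(lia)). simpl in Hz2.
    apply Rmult_integral in Hz2. destruct Hz2 as [Hz2|Hz2].
    { assert (0 < omega i) by (apply Hw; lia). lra. }
    unfold FF, glue in Hz2.
    destruct (Rle_dec (tau i) l); [lra|]. destruct (Rle_dec (tau i) (l+h)); [lra|].
    destruct (Rle_dec (tau i) (l+2*h)); [|lra].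
    unfold Gp, Sg in Hz2.
    rewrite Hkj. fold h.
    apply Rmult_integral in Hz2. destruct Hz2 as [Hz2|Hz2].
    { apply pow_eq_zero in Hz2. lra. }
    apply Rmult_integral in Hz2. destruct Hz2 as [Hz2|Hz2].
    2: { apply pow_eq_zero in Hz2. lra. }
    apply Rmult_integral in Hz2. destruct Hz2 as [Hz2|Hz2]. lra.
    apply pow_eq_zero in Hz2. lra.
Qed.

Definition OneNode a b n (tau : nat -> R) j := exists t,
  forall i, (i < 2*n+1)%nat -> knot a b n (j-1) < tau i < knot a b n j -> tau i = t.

Lemma chain a b n tau omega : a < b -> (1 <= n)%nat -> gauss_rule a b n tau omega ->
  forall d j, (n - j = d)%nat -> (1 <= j <= n)%nat -> OneNode a b n tau j -> False.
Proof.
  intros Hab Hn Hg d. induction d; intros j Hd Hj [t Ht].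
  - destruct (key a b n tau omega Hab Hn Hg j t Hj Ht) as [Hlt _]. lia.
  - destruct (key a b n tau omega Hab Hn Hg j t Hj Ht) as [Hlt H2].
    apply (IHd (S j)). lia. lia. eexists; exact H2.
Qed.

Theorem lemma2 (a b : R) (n : nat) (tau omega : nat -> R) :
  a < b -> (1 <= n)%nat -> gauss_rule a b n tau omega ->
  forall k : nat, (1 <= k <= n)%nat ->
    exists i j : nat,
      (i < 2 * n + 1)%nat /\ (j < 2 * n + 1)%nat /\ i <> j /\
      knot a b n (k - 1) < tau i < knot a b n k /\
      knot a b n (k - 1) < tau j < knot a b n k.
Proof.
  intros Hab Hn Hg k Hk. apply NNPP. intros Hneg.
  apply (chain a b n tau omega Hab Hn Hg (n - k) k eq_refl Hk).
  destruct (classic (exists i0, (i0 < 2*n+1)%nat /\ knot a b n (k-1) < tau i0 < knot a b n k))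
    as [[i0 [Hi0 Hx0]]|Hno].
  - exists (tau i0). intros i Hi Hx.
    destruct (Nat.eq_dec i i0) as [->|Hne]; auto.
    exfalso. apply Hneg. exists i, i0. tauto.
  - exists 0. intros i Hi Hx. exfalso. apply Hno. exists i. auto.
Qed.
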